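(* Let $R$ be a local ring with Jacobson radical $J(R)$, set $\overline{R}=R/J(R)$, and let $C_n$ be a cyclic group of order $n$. If the characteristic of $\overline{R}$ is not $2$, then the group ring $RC_n$ is 2-clean.
   Context: A local ring is a ring $R$ such that $R/J(R)$ is a division ring. A ring $S$ is 2-clean if every element of $S$ can be written as $e+u_1+u_2$ with $e=e^2\in S$ and $u_1,u_2$ units of $S$. *)

(* Defs.v *)
From mathcomp Require Import all_boot all_algebra.
Set Implicit Arguments. Unset Strict Implicit. Unset Printing Implicit Defensive.
Import GRing.Theory.
Local Open Scope ring_scope.

Definition jacobson (R : unitRingType) (x : R) : Prop :=
  forall r : R, (1 - r * x) \is a GRing.unit.

(* R is local: R / J(R) is a division ring, i.e. the quotient is nontrivial
   (1 \notin J(R)) and every class x + J(R) with x \notin J(R) has a two-sided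
   inverse modulo J(R). *)
Definition local_ring (R : unitRingType) : Prop :=
  ~ jacobson (1 : R) /\
  forall x : R, ~ jacobson x ->
    exists y : R, jacobson (x * y - 1) /\ jacobson (y * x - 1).

Definition char_quot_not2 (R : unitRingType) : Prop := ~ jacobson (2%:R : R).

Definition grp_ring (R : unitRingType) (n : nat) := {ffun 'I_n -> R}.

Definition gr_one (R : unitRingType) (n : nat) : grp_ring R n :=
  [ffun i : 'I_n => if val i == 0%N then 1 else 0].

Definition gr_mul (R : unitRingType) (n : nat) (f g : grp_ring R n) : grp_ring R n :=
  [ffun k : 'I_n => \sum_(i : 'I_n) \sum_(j : 'I_n | ((i + j) %% n)%N == val k)
      f i * g j].

Definition gr_unit (R : unitRingType) (n : nat) (u : grp_ring R n) : Prop :=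
  exists v : grp_ring R n, gr_mul u v = gr_one R n /\ gr_mul v u = gr_one R n.

Definition gr_idem (R : unitRingType) (n : nat) (e : grp_ring R n) : Prop :=
  gr_mul e e = e.

Definition gr_two_clean (R : unitRingType) (n : nat) : Prop :=
  forall a : grp_ring R n, exists e u1 u2 : grp_ring R n,
    [/\ gr_idem e, gr_unit u1, gr_unit u2 & a = e + u1 + u2].

(* Main.v *)
Require Import Defs.
From mathcomp Require Import all_boot all_algebra.
From HB Require Import structures.
From Stdlib Require Classical_Prop ClassicalEpsilon.
Set Implicit Arguments. Unset Strict Implicit. Unset Printing Implicit Defensive.
Import GRing.Theory.
Local Open Scope ring_scope.
Local Open Scope quotient_scope.
Section Jac.
Variable R : unitRingType.

Lemma unit_1ab (a b : R) : (1 - a * b) \is a GRing.unit -> (1 - b * a) \is a GRing.unit.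
Proof.
move=> U; set u := (1 - a * b)^-1.
have E1 : u - a * b * u = 1 by rewrite -{1}(mul1r u) -mulrBl mulrV.
have E2 : u - u * (a * b) = 1 by rewrite -{1}(mulr1 u) -mulrBr mulVr.
apply/unitrP; exists (1 + b * u * a); split.
- rewrite mulrDl mul1r mulrBr mulr1.
  have -> : b * u * a * (b * a) = b * (u * (a * b)) * a by rewrite !mulrA.
  by rewrite -mulrBl -mulrBr E2 mulr1 subrK.
- rewrite mulrDr mulr1 mulrBl mul1r.
  have -> : b * a * (b * u * a) = b * (a * b * u) * a by rewrite !mulrA.
  by rewrite -mulrBl -mulrBr E1 mulr1 subrK.
Qed.

Local Notation J := (@jacobson R).

Lemma jacMl r x : J x -> J (r * x).
Proof. by move=> Jx s; rewrite mulrA. Qed.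

Lemma jacMr x r : J x -> J (x * r).
Proof. by move=> Jx s; rewrite mulrA; apply: unit_1ab; rewrite mulrA; apply: Jx. Qed.

Lemma jac0 : J 0.
Proof. by move=> s; rewrite mulr0 subr0 unitr1. Qed.

Lemma jacD x y : J x -> J y -> J (x + y).
Proof.
move=> Jx Jy r; have U := Jx r; set w := (1 - r * x)^-1.
have -> : 1 - r * (x + y) = (1 - r * x) * (1 - (w * r) * y).
  by rewrite mulrBr mulr1 !mulrA mulrV // -!mulrA mul1r mulrDr opprD addrA.
by rewrite unitrMr // Jy.
Qed.

Lemma jacN x : J x -> J (- x).
Proof. by move=> Jx; rewrite -mulN1r; apply: jacMl. Qed.

Lemma jacB x y : J x -> J y -> J (x - y).
Proof. by move=> Jx Jy; apply: jacD => //; apply: jacN. Qed.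

Lemma jac_sum (I : finType) (P : pred I) (F : I -> R) :
  (forall i, P i -> J (F i)) -> J (\sum_(i | P i) F i).
Proof. by move=> H; apply: (big_ind J) => //; [apply: jac0 | apply: jacD]. Qed.

Lemma jac1B x : J x -> (1 - x) \is a GRing.unit.
Proof. by move=> Jx; have := Jx 1; rewrite mul1r. Qed.

Hypothesis Rloc : local_ring R.

Lemma notjac_unit x : ~ J x -> x \is a GRing.unit.
Proof.
move=> nJ; have [y [J1 J2]] := (proj2 Rloc) x nJ.
have U1 : x * y \is a GRing.unit.
  by have := J1 (-1); rewrite mulN1r opprK addrC subrK.
have U2 : y * x \is a GRing.unit.
  by have := J2 (-1); rewrite mulN1r opprK addrC subrK.
have Hr : x * (y / (x * y)) = 1 by rewrite mulrA mulrV.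
have Hl : (y * x)^-1 * y * x = 1 by rewrite -mulrA mulVr.
have E : y / (x * y) = (y * x)^-1 * y.
  by rewrite -[LHS]mul1r -Hl -mulrA Hr mulr1.
by apply/unitrP; exists (y / (x * y)); split => //; rewrite E.
Qed.

Lemma unit_notjac x : x \is a GRing.unit -> ~ J x.
Proof. by move=> U Jx; apply: (proj1 Rloc); rewrite -(mulVr U); apply: jacMl. Qed.

Lemma jac_or_unit x : J x \/ x \is a GRing.unit.
Proof.
case: (Classical_Prop.classic (J x)) => [|nJ]; first by left.
by right; apply: notjac_unit.
Qed.

Hypothesis R2 : char_quot_not2 R.

Lemma two_unit : (2%:R : R) \is a GRing.unit.
Proof. exact: notjac_unit. Qed.

End Jac.

Section GR.
Variable R : unitRingType.
Variable m : nat.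
Local Notation n := m.+1.
Definition GR := grp_ring R n.
HB.instance Definition _ := GRing.Zmodule.on GR.

Lemma gr_mulE (f g : GR) k : gr_mul f g k = \sum_(i : 'I_n) f i * g (k - i)%R.
Proof.
rewrite ffunE; apply: eq_bigr => i _.
rewrite (big_pred1 (k - i)%R) // => j /=.
have -> : ((i + j) %% n)%N = val (i + j)%R by [].
rewrite val_eqE; apply/eqP/eqP => [<-|->]; [by rewrite addrC addKr | by rewrite addrC subrK].
Qed.

Lemma gr_mulA : associative (@gr_mul R n : GR -> GR -> GR).
Proof.
move=> f g h; apply/ffunP => k; rewrite !gr_mulE.
under [RHS]eq_bigr do rewrite gr_mulE mulr_suml.
under [LHS]eq_bigr do rewrite gr_mulE mulr_sumr.
apply: esym.
rewrite exchange_big /=; apply: eq_bigr => i _.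
rewrite (reindex_inj (addrI i)) /=; apply: eq_bigr => l _.
by rewrite -mulrA (addrC i l) addrK opprD addrA addrAC.
Qed.

Lemma gr_mulDl : left_distributive (@gr_mul R n : GR -> GR -> GR) +%R.
Proof.
move=> f g h; apply/ffunP => k; rewrite gr_mulE [in RHS]ffunE !gr_mulE -big_split /=.
by apply: eq_bigr => i _; rewrite ffunE mulrDl.
Qed.

Lemma gr_mulDr : right_distributive (@gr_mul R n : GR -> GR -> GR) +%R.
Proof.
move=> f g h; apply/ffunP => k; rewrite gr_mulE [in RHS]ffunE !gr_mulE -big_split /=.
by apply: eq_bigr => i _; rewrite ffunE mulrDr.
Qed.

Lemma gr_oneE (i : 'I_n) : gr_one R n i = if i == 0%R then 1 else 0.
Proof. by rewrite ffunE -val_eqE. Qed.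

Lemma gr_mul1 : left_id (gr_one R n : GR) (@gr_mul R n).
Proof.
move=> g; apply/ffunP => k; rewrite gr_mulE (bigD1 0%R) //= big1 ?addr0.
  by rewrite gr_oneE eqxx mul1r subr0.
by move=> i /negbTE ni0; rewrite gr_oneE ni0 mul0r.
Qed.

Lemma gr_mul1r : right_id (gr_one R n : GR) (@gr_mul R n).
Proof.
move=> g; apply/ffunP => k; rewrite gr_mulE (bigD1 k) //= big1 ?addr0.
  by rewrite gr_oneE subrr eqxx mulr1.
move=> i ni; rewrite gr_oneE.
have -> : (k - i == 0)%R = false by rewrite subr_eq0 eq_sym (negbTE ni).
by rewrite mulr0.
Qed.

Lemma gr_one_neq0 : (gr_one R n : GR) != 0.
Proof. by apply/eqP => /ffunP /(_ 0%R); rewrite gr_oneE eqxx ffunE => /eqP; rewrite oner_eq0. Qed.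

HB.instance Definition _ := GRing.Zmodule_isNzRing.Build GR
  gr_mulA gr_mul1 gr_mul1r gr_mulDl gr_mulDr gr_one_neq0.

Lemma GR_mulE (f g : GR) : f * g = gr_mul f g. Proof. by []. Qed.
Lemma GR_oneE : (1 : GR) = gr_one R n. Proof. by []. Qed.

End GR.
Section C5.
Variable T : nzRingType.

Lemma peirce_r (X Y X' Y' p q : T) : p + q = 1 -> X * X' = p -> Y * Y' = q ->
  X * Y' = 0 -> Y * X' = 0 -> (X + Y) * (X' + Y') = 1.
Proof.
by move=> pq h1 h2 h3 h4; rewrite mulrDl !mulrDr h1 h2 h3 h4 addr0 add0r.
Qed.

Lemma geom (N : T) k : N ^+ k = 0 ->
  (1 - N) * (\sum_(i < k) N ^+ i) = 1 /\ (\sum_(i < k) N ^+ i) * (1 - N) = 1.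
Proof.
move=> Nk; have E := subrX1 N k; rewrite Nk sub0r in E.
set G := \sum_(i < k) _ in E *.
have C : G * N = N * G.
  by rewrite mulr_suml mulr_sumr; apply: eq_bigr => i _; rewrite -exprSr exprS.
have L : (1 - N) * G = 1 by rewrite -opprB mulNr -E opprK.
by split => //; rewrite mulrBr mulr1 C -{1}(mul1r G) -mulrBl L.
Qed.

Variables (a h b : T) (k : nat).
Hypotheses (k0 : (0 < k)%N) (hC : forall x, h * x = x * h) (h2 : h + h = 1)
  (Hb : a ^+ k = a ^+ (k + k) * b)
  (Hc : forall x, a ^+ (k + k) * x = 0 -> a ^+ k * x = 0).

Variables (y p q N w : T).
Hypotheses (yE : y = a ^+ k) (pE : p = y * b) (qE : q = 1 - p) (NE : N = a * q)
  (wE : w = p * a ^+ k.-1 * b * p).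

Lemma canc x : y * (y * x) = 0 -> y * x = 0.
Proof. by rewrite yE mulrA -exprD; apply: Hc. Qed.

Lemma yb : y * (y * b) = y.
Proof. by rewrite yE mulrA -exprD -Hb. Qed.

Lemma yp : y * p = y. Proof. by rewrite pE yb. Qed.

Lemma pp : p * p = p.
Proof.
apply/eqP; rewrite -subr_eq0; apply/eqP.
have -> : p * p - p = y * (b * p - b) by rewrite mulrBr {1 3}pE -mulrA.
apply: canc; rewrite !mulrBr [y * (b * p)]mulrA [y * (y * b * p)]mulrA yb.
by rewrite yp subrr.
Qed.

Lemma ay : a * y = y * a.
Proof. by rewrite yE -exprS exprSr. Qed.

Lemma ap : a * p = p * a.
Proof.
apply/eqP; rewrite -subr_eq0; apply/eqP.
have -> : a * p - p * a = y * (a * b - b * a).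
  by rewrite pE mulrBr !mulrA ay.
have e1 : y * (y * (a * b)) = a * y.
  by rewrite (mulrA y a b) -ay -(mulrA a y b) mulrA -ay -mulrA yb.
have e2 : y * (y * (b * a)) = y * a by rewrite mulrA mulrA -(mulrA y y b) yb.
by apply: canc; rewrite !mulrBr e1 e2 ay subrr.
Qed.

Lemma yq : y * q = 0. Proof. by rewrite qE mulrBr mulr1 yp subrr. Qed.
Lemma aq : a * q = q * a. Proof. by rewrite qE mulrBr mulrBl mulr1 mul1r ap. Qed.
Lemma pq : p * q = 0. Proof. by rewrite qE mulrBr mulr1 pp subrr. Qed.
Lemma qp : q * p = 0. Proof. by rewrite qE mulrBl mul1r pp subrr. Qed.
Lemma qq : q * q = q. Proof. by rewrite {1}qE mulrBl mul1r pq subr0. Qed.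
Lemma pqE : p + q = 1. Proof. by rewrite qE addrC subrK. Qed.

Lemma Npow i : N ^+ i.+1 = a ^+ i.+1 * q.
Proof.
elim: i => [|i IH]; first by rewrite !expr1.
by rewrite exprSr IH NE -mulrA (mulrA q a q) -aq -mulrA qq mulrA -exprSr.
Qed.
Lemma Nk : N ^+ k = 0.
Proof. by rewrite -(prednK k0) Npow prednK // -yE yq. Qed.
Lemma qN : q * N = N. Proof. by rewrite NE mulrA -aq -mulrA qq. Qed.
Lemma Nq : N * q = N. Proof. by rewrite NE -mulrA qq. Qed.

Lemma aw : a * w = p.
Proof.
rewrite wE !mulrA ap -(mulrA p a) -exprS prednK // -yE.
by rewrite -(mulrA p y b) -pE !pp.
Qed.
Lemma pw : p * w = w. Proof. by rewrite wE !mulrA pp. Qed.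
Lemma wp : w * p = w. Proof. by rewrite wE -mulrA pp. Qed.
Lemma wq : w * q = 0. Proof. by rewrite qE mulrBr mulr1 wp subrr. Qed.
Lemma qw : q * w = 0. Proof. by rewrite qE mulrBl mul1r pw subrr. Qed.
Lemma ya x : y * (a ^+ x) = a ^+ x * y. Proof. by rewrite yE -!exprD addnC. Qed.

Lemma wa : w * a = p.
Proof.
set x := w * a - p.
have px : p * x = x by rewrite /x mulrBr mulrA pw pp.
have yw : y * w = a ^+ k.-1 * p.
  by rewrite wE !mulrA yp ya -(mulrA _ y b) -pE -mulrA pp.
have yx : y * x = 0.
  rewrite /x mulrBr mulrA yw yp -mulrA -ap mulrA -exprSr prednK //.
  by rewrite -yE yp subrr.
have : y * (b * x) = 0 by apply: canc; rewrite (mulrA y b x) -pE px.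
rewrite (mulrA y b x) -pE px => x0.
by apply/eqP; rewrite -subr_eq0 -/x x0.
Qed.

Lemma hww : h * (w + w) = w. Proof. by rewrite mulrDr -mulrDl h2 mul1r. Qed.
Lemma XX' : a * p * h * (w + w) = p. Proof. by rewrite -mulrA hww -mulrA pw aw. Qed.
Lemma Xq : a * p * h * q = 0.
Proof. by rewrite -mulrA hC mulrA -(mulrA a p q) pq mulr0 mul0r. Qed.
Lemma qww : q * (w + w) = 0. Proof. by rewrite mulrDr qw addr0. Qed.
Lemma X'X : (w + w) * (a * p * h) = p.
Proof.
by rewrite !mulrA mulrDl wa mulrDl pp mulrDl -mulrDr h2 mulr1.
Qed.
Lemma wwq : (w + w) * q = 0. Proof. by rewrite mulrDl wq addr0. Qed.
Lemma qX : q * (a * p * h) = 0.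
Proof. by rewrite !mulrA -aq -(mulrA a q p) qp mulr0 mul0r. Qed.

Lemma u2E : a - (a * p * h + q) = a * p * h + (N - q).
Proof.
apply/eqP; rewrite subr_eq; apply/eqP.
by rewrite addrACA subrK NE -!mulrDr h2 mulr1 -mulrDr pqE mulr1.
Qed.

Lemma C5main : exists u1 v1 v2 : T,
  [/\ u1 * v1 = 1, v1 * u1 = 1, (a - u1) * v2 = 1 & v2 * (a - u1) = 1].
Proof.
have [G1 G2] := geom Nk; set G := \sum_(i < k) _ in G1 G2.
exists (a * p * h + q), (w + w + q).
have R2 : (a * p * h + (N - q)) * (w + w - q * G) = 1.
  apply: (peirce_r pqE XX').
  - have e : q - N = q * (1 - N) by rewrite mulrBr mulr1 qN.
    by rewrite mulrN mulrA mulrBl Nq qq -mulNr opprB e -mulrA G1 mulr1.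
  - by rewrite mulrN mulrA Xq mul0r oppr0.
  - by rewrite mulrBl NE -mulrA qww mulr0 subrr.
have L2 : (w + w - G * q) * (a * p * h + (N - q)) = 1.
  apply: (peirce_r pqE X'X).
  - have e : q - N = (1 - N) * q by rewrite mulrBl mul1r Nq.
    by rewrite mulNr -mulrA mulrBr qN qq -mulrN opprB e mulrA G2 mul1r.
  - by rewrite mulrBr NE mulrA wwq (mulrDl w w a) wa mulrDl pq addr0 subr0.
  - by rewrite mulNr -(mulrA G q) qX mulr0 oppr0.
exists (w + w - q * G); rewrite u2E; split => //.
- by apply: (peirce_r pqE XX') => //; [exact: qq | exact: Xq | exact: qww].
- by apply: (peirce_r pqE X'X) => //; [exact: qq | exact: wwq | exact: qX].
- have E : w + w - q * G = w + w - G * q.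
    by rewrite -[LHS]mul1r -L2 -mulrA R2 mulr1.
  by rewrite E.
Qed.
End C5.

Section Main.
Variable R : unitRingType.
Hypothesis Rloc : local_ring R.
Variable m : nat.
Local Notation n := m.+1.
Local Notation S := (GR R m).
Local Notation J := (@jacobson R).

Definition Iset (f : S) := forall i, J (f i).

Definition sc (r : R) : S := [ffun i : 'I_n => if i == 0%R then r else 0].

Lemma addE (f g : S) i : (f + g) i = f i + g i. Proof. by rewrite ffunE. Qed.
Lemma oppE (f : S) i : (- f) i = - f i. Proof. by rewrite ffunE. Qed.
Lemma subE (f g : S) i : (f - g) i = f i - g i. Proof. by rewrite addE oppE. Qed.
Lemma zeroE i : (0 : S) i = 0. Proof. by rewrite ffunE. Qed.
Lemma oneE (i : 'I_n) : (1 : S) i = if i == 0%R then 1 else 0.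
Proof. exact: gr_oneE. Qed.

Lemma mulE (f g : S) k : (f * g) k = \sum_(i : 'I_n) f i * g (k - i)%R.
Proof. exact: gr_mulE. Qed.

Lemma mulscE (f : S) r i : (f * sc r) i = f i * r.
Proof.
rewrite mulE (bigD1 i) //= big1 ?addr0; first by rewrite ffunE subrr eqxx.
by move=> k nk; rewrite ffunE subr_eq0 eq_sym (negbTE nk) mulr0.
Qed.

Lemma scmulE (f : S) r i : (sc r * f) i = r * f i.
Proof.
rewrite mulE (bigD1 0%R) //= big1 ?addr0; first by rewrite ffunE eqxx subr0.
by move=> k nk; rewrite ffunE (negbTE nk) mul0r.
Qed.

Lemma I0 : Iset 0. Proof. by move=> i; rewrite zeroE; apply: jac0. Qed.
Lemma ID f g : Iset f -> Iset g -> Iset (f + g).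
Proof. by move=> If Ig i; rewrite addE; apply: jacD. Qed.
Lemma IN f : Iset f -> Iset (- f).
Proof. by move=> If i; rewrite oppE; apply: jacN. Qed.
Lemma IB f g : Iset f -> Iset g -> Iset (f - g).
Proof. by move=> If Ig; apply: ID => //; apply: IN. Qed.
Lemma IMl g f : Iset f -> Iset (g * f).
Proof. by move=> If k; rewrite mulE; apply: jac_sum => i _; apply: jacMl. Qed.
Lemma IMr f g : Iset f -> Iset (f * g).
Proof. by move=> If k; rewrite mulE; apply: jac_sum => i _; apply: jacMr. Qed.
Lemma Ieq f g : f = g -> Iset f -> Iset g. Proof. by move=> ->. Qed.

Lemma notI1 : ~ Iset 1.
Proof. by move=> /(_ 0%R); rewrite oneE eqxx; apply: (proj1 Rloc). Qed.

Definition delta (d : 'I_n) : S := [ffun i => if i == d then 1 else 0].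

Lemma right_inv_1B (j : S) : Iset j -> exists v : S, (1 - j) * v = 1.
Proof.
move=> Ij.
pose P t := forall f : S, exists g : S,
  (forall i, J ((f - (1 - j) * g) i)) /\
  (forall i : 'I_n, (i < t)%N -> (f - (1 - j) * g) i = 0).
have P0 : P 0%N.
  move=> f; exists f; split => // i.
  have -> : f - (1 - j) * f = j * f by rewrite mulrBl mul1r opprB addrC subrK.
  exact: IMr.
have PS t : P t -> P t.+1.
  move=> Pt f; have [g [Jh Zh]] := Pt f.
  case: (ltnP t n) => [tn|nt]; last first.
    exists g; split => // i it; apply: Zh; apply: leq_trans (ltn_ord i) nt.
  pose d := Ordinal tn.
  have [g' [Jh' Zh']] := Pt (delta d).
  set h := f - (1 - j) * g in Jh Zh *.
  set h' := delta d - (1 - j) * g' in Jh' Zh' *.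
  have U := jac1B (Jh' d).
  pose c := (1 - h' d)^-1.
  exists (g + g' * sc (c * h d)).
  have E : f - (1 - j) * (g + g' * sc (c * h d)) = h - (delta d - h') * sc (c * h d).
    rewrite /h' /h; set X := sc _.
    rewrite opprB (addrC (delta d)) subrK mulrDr opprD addrA mulrA.
    by [].
  rewrite E; split.
    move=> i; rewrite subE mulscE; apply: jacB => //; apply: jacMl; exact: jacMl.
  move=> i; rewrite ltnS leq_eqVlt => /orP [/eqP it | it].
    have -> : i = d by apply/val_inj.
    rewrite subE mulscE subE.
    have -> : delta d d = 1 by rewrite /delta ffunE eqxx.
    by rewrite mulrA /c mulrV // mul1r subrr.
  rewrite subE mulscE subE Zh // Zh' // /delta ffunE.
  have -> : (i == d) = false by apply/negbTE; rewrite -val_eqE /= neq_ltn it.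
  by rewrite subrr mul0r subrr.
have Pn : P n by elim: n => [|t IH] //; apply: PS.
have [g [_ Zh]] := Pn 1; exists g.
apply/eqP; rewrite eq_sym -subr_eq0; apply/eqP/ffunP => i.
by rewrite Zh // zeroE.
Qed.

Lemma inv_1B (j : S) : Iset j -> exists v : S, (1 - j) * v = 1 /\ v * (1 - j) = 1.
Proof.
move=> Ij; have [v Hv] := right_inv_1B Ij.
have Ev : 1 - (- (j * v)) = v by rewrite opprK -{1}Hv mulrBl mul1r subrK.
have [w Hw] : exists w, v * w = 1.
  by rewrite -Ev; apply: right_inv_1B; apply: IN; apply: IMr.
have E : w = 1 - j by rewrite -[w]mul1r -{1}Hv -mulrA Hw mulr1.
by exists v; split => //; rewrite -E.
Qed.

Lemma lift_unit (u v : S) : Iset (u * v - 1) -> Iset (v * u - 1) -> gr_unit u.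
Proof.
move=> H1 H2.
have [a1 [Ha1 _]] := inv_1B (IN H1).
have [a2 [_ Ha2]] := inv_1B (IN H2).
rewrite opprK addrC subrK in Ha1; rewrite opprK addrC subrK in Ha2.
have Hr : u * (v * a1) = 1 by rewrite mulrA.
have Hl : a2 * v * u = 1 by rewrite -mulrA.
have E : v * a1 = a2 * v by rewrite -[LHS]mul1r -Hl -mulrA Hr mulr1.
by exists (v * a1); split; [exact: Hr | rewrite E; exact: Hl].
Qed.

Definition pb (P : Prop) : bool :=
  if ClassicalEpsilon.excluded_middle_informative P then true else false.
Lemma pbP (P : Prop) : reflect P (pb P).
Proof. by rewrite /pb; case: ClassicalEpsilon.excluded_middle_informative => H; constructor. Qed.

Definition subsp (V : S -> Prop) :=
  [/\ (forall f, Iset f -> V f), (forall f g, V f -> V g -> V (f + g))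
    & (forall f r, V f -> V (f * sc r))].

Definition lead (f : S) (d : 'I_n) :=
  f d \is a GRing.unit /\ forall i : 'I_n, (d < i)%N -> J (f i).

Definition Ldeg (V : S -> Prop) : {set 'I_n} :=
  [set d | pb (exists f, V f /\ lead f d)].

Lemma echelon (V W : S -> Prop) : subsp V -> subsp W -> (forall f, W f -> V f) ->
  Ldeg V \subset Ldeg W -> forall f, V f -> W f.
Proof.
move=> [V0 VD VZ] [W0 WD WZ] WV sL.
pose P t := forall f, V f -> (forall i : 'I_n, (t <= i)%N -> J (f i)) -> W f.
have P0 : P 0%N by move=> f _ H; apply: W0 => i; apply: H.
have PS t : P t -> P t.+1.
  move=> Pt f Vf H; case: (ltnP t n) => [tn|nt]; last first.
    apply: Pt => // i ti; exfalso; move: (leq_trans nt ti); by rewrite leqNgt ltn_ord.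
  pose d := Ordinal tn.
  have Hd (i : 'I_n) : (t <= i)%N -> (i : nat) <> t -> J (f i).
    by move=> ti nit; apply: H; rewrite ltn_neqAle ti andbT; apply/eqP => E; apply: nit.
  case: (jac_or_unit Rloc (f d)) => [Jd | Ud].
    apply: Pt => // i ti; case: (eqVneq (i : nat) t) => [it | nit].
      by have -> : i = d by apply/val_inj.
    by apply: Hd => //; apply/eqP.
  have : d \in Ldeg V.
    rewrite inE; apply/pbP; exists f; split => //; split => // i di; exact: H.
  move/(subsetP sL); rewrite inE => /pbP [g [Wg [Ug Lg]]].
  pose r := - ((g d)^-1 * f d).
  have Vf' : V (f + g * sc r) by apply: VD => //; apply: VZ; apply: WV.
  have Wf' : W (f + g * sc r).
    apply: Pt => // i ti; rewrite addE mulscE.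
    case: (eqVneq (i : nat) t) => [it | nit].
      have -> : i = d by apply/val_inj.
      by rewrite /r mulrN mulrA mulrV // mul1r subrr; apply: jac0.
    apply: jacD; first by apply: Hd => //; apply/eqP.
    by apply: jacMr; apply: Lg; rewrite /= ltn_neqAle ti andbT eq_sym nit.

  have -> : f = (f + g * sc r) + g * sc (- r).
    by apply/ffunP => i; rewrite !addE !mulscE -addrA -mulrDr subrr mulr0 addr0.
  by apply: WD => //; apply: WZ.
have Pn : P n by elim: n => [|t IH] //; apply: PS.
move=> f Vf; apply: Pn => // i ni; exfalso; move: (leq_trans ni (ltn_ord i)); by rewrite ltnn.
Qed.

Lemma Ldeg_mono (V W : S -> Prop) : (forall f, W f -> V f) -> Ldeg W \subset Ldeg V.
Proof.
move=> WV; apply/subsetP => d; rewrite !inE => /pbP [f [Wf Lf]].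
by apply/pbP; exists f; split => //; apply: WV.
Qed.

Lemma Ldeg_card (V : S -> Prop) : (#|Ldeg V| <= n)%N.
Proof. by apply: leq_trans (max_card _) _; rewrite card_ord. Qed.

Lemma pigeon (c : nat -> nat) : (forall k, c k.+1 <= c k)%N -> (c 0 <= n)%N ->
  exists k, (k <= n)%N /\ c k.+1 = c k.
Proof.
move=> dec c0; apply: Classical_Prop.NNPP => nE.
have H k : (k <= n.+1)%N -> (c k + k <= c 0)%N.
  elim: k => [|k IH] kn; first by rewrite addn0.
  have lt : (c k.+1 < c k)%N.
    rewrite ltn_neqAle dec andbT; apply/eqP => E; apply: nE; exists k; split => //.
  by rewrite addnS; apply: leq_trans (IH (ltnW kn)); rewrite ltn_add2r.
by move: (leq_trans (H _ (leqnn _)) c0); rewrite addnS ltnNge leq_addl.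
Qed.

Section Chains.
Variable a : S.

Definition Vk k (f : S) := exists g, Iset (f - a ^+ k * g).
Definition Kk k (f : S) := Iset (a ^+ k * f).

Lemma Vk_subsp k : subsp (Vk k).
Proof.
split.
- by move=> f If; exists 0; rewrite mulr0 subr0.
- move=> f f' [g Hg] [g' Hg']; exists (g + g').
  apply: Ieq (ID Hg Hg'); rewrite mulrDr opprD !addrA; congr (_ + _).
  by rewrite -!addrA; congr (_ + _); rewrite addrC.
- move=> f r [g Hg]; exists (g * sc r); apply: Ieq (IMr (sc r) Hg).
  by rewrite mulrBl mulrA.
Qed.

Lemma Kk_subsp k : subsp (Kk k).
Proof.
split.
- by move=> f If; apply: IMl.
- by move=> f g Hf Hg; rewrite /Kk mulrDr; apply: ID.
- by move=> f r Hf; rewrite /Kk mulrA; apply: IMr.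
Qed.

Lemma Vk_dec k f : Vk k.+1 f -> Vk k f.
Proof. by move=> [g Hg]; exists (a * g); rewrite mulrA -exprSr. Qed.

Lemma Kk_inc k f : Kk k f -> Kk k.+1 f.
Proof. by move=> Hf; rewrite /Kk exprS -mulrA; apply: IMl. Qed.

Lemma Vk_stab k : (forall f, Vk k f -> Vk k.+1 f) -> forall f, Vk k.+1 f -> Vk k.+2 f.
Proof.
move=> H f [g Hg].
have [g' Hg'] : Vk k.+1 (a ^+ k * g) by apply: H; exists g; rewrite subrr; apply: I0.
exists g'; apply: Ieq (ID Hg (IMl a Hg')).
rewrite mulrBr !mulrA -!exprS addrA subrK.
by [].
Qed.

Lemma Kk_stab k : (forall f, Kk k.+1 f -> Kk k f) -> forall f, Kk k.+2 f -> Kk k.+1 f.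
Proof.
move=> H f Hf; rewrite /Kk exprSr -mulrA; apply: H.
by rewrite /Kk mulrA -exprSr.
Qed.

Lemma V_final : exists b, Iset (a ^+ n - a ^+ (n + n) * b).
Proof.
pose c k := #|Ldeg (Vk k)|.
have [k0 [k0n E]] : exists k, (k <= n)%N /\ c k.+1 = c k.
  apply: pigeon; last exact: Ldeg_card.
  by move=> k; apply: subset_leq_card; apply: Ldeg_mono; apply: Vk_dec.
have S0 : forall f, Vk k0 f -> Vk k0.+1 f.
  apply: echelon; try exact: Vk_subsp; first exact: Vk_dec.
  have sub := Ldeg_mono (@Vk_dec k0).
  have E' : #|Ldeg (Vk k0.+1)| = #|Ldeg (Vk k0)| := E.
  have /eqP EQ : Ldeg (Vk k0.+1) == Ldeg (Vk k0) by rewrite eqEcard sub E' leqnn.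
  by rewrite EQ subxx.
have St i : forall f, Vk (k0 + i) f -> Vk (k0 + i).+1 f.
  by elim: i => [|i IH]; [rewrite addn0 | rewrite addnS; apply: Vk_stab].
have Up i : forall f, Vk n f -> Vk (n + i) f.
  elim: i => [|i IH] f Hf; first by rewrite addn0.
  rewrite addnS; have := St (n + i - k0)%N; rewrite subnKC; first by apply; apply: IH.
  by apply: leq_trans k0n (leq_addr _ _).
have := Up n (a ^+ n); case; first by exists 1; rewrite mulr1 subrr; apply: I0.
by move=> b Hb; exists b.
Qed.

Lemma K_final : forall f, Iset (a ^+ (n + n) * f) -> Iset (a ^+ n * f).
Proof.
pose c k := (n - #|Ldeg (Kk k)|)%N.
have [k0 [k0n E]] : exists k, (k <= n)%N /\ c k.+1 = c k.
  apply: pigeon; last exact: leq_subr.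
  by move=> k; apply: leq_sub2l; apply: subset_leq_card; apply: Ldeg_mono; apply: Kk_inc.
have S0 : forall f, Kk k0.+1 f -> Kk k0 f.
  apply: echelon; try exact: Kk_subsp; first exact: Kk_inc.
  have sub := Ldeg_mono (@Kk_inc k0).
  have E' : #|Ldeg (Kk k0.+1)| = #|Ldeg (Kk k0)|.
    move: E; rewrite /c => /eqP; rewrite eqn_sub2lE ?Ldeg_card //; by move/eqP.
  have /eqP EQ : Ldeg (Kk k0) == Ldeg (Kk k0.+1) by rewrite eqEcard sub E' leqnn.
  by rewrite EQ subxx.
have St i : forall f, Kk (k0 + i).+1 f -> Kk (k0 + i) f.
  by elim: i => [|i IH]; [rewrite addn0 | rewrite addnS; apply: Kk_stab].
have Dn i : forall f, Kk (n + i) f -> Kk n f.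
  elim: i => [|i IH] f Hf; first by rewrite addn0 in Hf.
  have kle : (k0 <= n + i)%N by apply: leq_trans k0n (leq_addr _ _).
  apply: IH; rewrite addnS in Hf; have := St (n + i - k0)%N; rewrite subnKC //.
  by apply.
exact: Dn.
Qed.

End Chains.

Definition eqI (f g : S) : bool := pb (Iset (f - g)).
Lemma eqI_refl : reflexive eqI.
Proof. by move=> f; apply/pbP; rewrite subrr; apply: I0. Qed.
Lemma eqI_sym : symmetric eqI.
Proof.
by move=> f g; apply/pbP/pbP => H; rewrite -opprB; apply: IN.
Qed.
Lemma eqI_trans : transitive eqI.
Proof.
move=> g f h /pbP H1 /pbP H2; apply/pbP.
by rewrite -(subrK g f) -addrA; apply: ID.
Qed.
Definition eqIrel : equiv_rel S := EquivRel eqI eqI_refl eqI_sym eqI_trans.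
Definition Q := {eq_quot eqIrel}.
HB.instance Definition _ := Choice.on Q.
HB.instance Definition _ := Quotient.on Q.

Local Notation pi := (\pi_Q).

Lemma piP (f g : S) : pi f = pi g <-> Iset (f - g).
Proof.
split; first by move/eqmodP => /pbP.
by move=> H; apply/eqmodP; apply/pbP.
Qed.

Lemma reprI (f : S) : Iset (repr (pi f) - f).
Proof. by apply/piP; rewrite reprK. Qed.

Definition qadd (x y : Q) : Q := pi (repr x + repr y).
Definition qopp (x : Q) : Q := pi (- repr x).
Definition qmul (x y : Q) : Q := pi (repr x * repr y).
Definition qzero : Q := pi 0.
Definition qone : Q := pi 1.

Lemma piD f g : pi (f + g) = qadd (pi f) (pi g).
Proof.
apply/piP; apply: Ieq (IN (ID (reprI f) (reprI g))).
by rewrite opprD !opprB addrACA opprD.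
Qed.
Lemma piN f : pi (- f) = qopp (pi f).
Proof. by apply/piP; apply: Ieq (reprI f); rewrite opprK addrC. Qed.
Lemma piM f g : pi (f * g) = qmul (pi f) (pi g).
Proof.
apply/piP; set rf := repr (pi f); set rg := repr (pi g).
apply: Ieq (IB (IN (IMr g (reprI f))) (IMl rf (reprI g))).
by rewrite mulrBl mulrBr !opprB addrA subrK.
Qed.

Lemma qaddA : associative qadd.
Proof.
elim/quotW => x; elim/quotW => y; elim/quotW => z.
by rewrite -(piD y z) -(piD x (y + z)) -(piD x y) -(piD (x + y) z) addrA.
Qed.
Lemma qaddC : commutative qadd.
Proof. by elim/quotW => x; elim/quotW => y; rewrite -(piD x y) -(piD y x) addrC. Qed.
Lemma qadd0 : left_id qzero qadd.
Proof. by elim/quotW => x; rewrite /qzero -(piD 0 x) add0r. Qed.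
Lemma qaddN : left_inverse qzero qopp qadd.
Proof. by elim/quotW => x; rewrite -(piN x) -(piD (- x) x) addNr. Qed.

HB.instance Definition _ := GRing.isZmodule.Build Q qaddA qaddC qadd0 qaddN.

Lemma piD' f g : pi (f + g) = pi f + pi g. Proof. exact: piD. Qed.
Lemma pi0 : pi 0 = 0. Proof. by []. Qed.

Lemma qmulA : associative qmul.
Proof.
elim/quotW => x; elim/quotW => y; elim/quotW => z.
by rewrite -(piM y z) -(piM x (y * z)) -(piM x y) -(piM (x * y) z) mulrA.
Qed.
Lemma qmul1 : left_id qone qmul.
Proof. by elim/quotW => x; rewrite /qone -(piM 1 x) mul1r. Qed.
Lemma qmulr1 : right_id qone qmul.
Proof. by elim/quotW => x; rewrite /qone -(piM x 1) mulr1. Qed.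
Lemma qmulDl : left_distributive qmul +%R.
Proof.
elim/quotW => x; elim/quotW => y; elim/quotW => z.
by rewrite -(piD' x y) -(piM (x + y) z) -(piM x z) -(piM y z) -(piD' (x * z)) mulrDl.
Qed.
Lemma qmulDr : right_distributive qmul +%R.
Proof.
elim/quotW => x; elim/quotW => y; elim/quotW => z.
by rewrite -(piD' y z) -(piM x (y + z)) -(piM x y) -(piM x z) -(piD' (x * y)) mulrDr.
Qed.
Lemma qone_neq0 : qone != 0.
Proof. by apply/eqP => /piP; rewrite subr0; apply: notI1. Qed.

HB.instance Definition _ := GRing.Zmodule_isNzRing.Build Q qmulA qmul1 qmulr1 qmulDl qmulDr qone_neq0.

Lemma piM' f g : pi (f * g) = pi f * pi g. Proof. exact: piM. Qed.
Lemma pi1 : pi 1 = 1. Proof. by []. Qed.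
Lemma piB' f g : pi (f - g) = pi f - pi g. Proof. by rewrite piD' piN. Qed.
Lemma piX f k : pi (f ^+ k) = pi f ^+ k.
Proof. by elim: k => [|k IH]; rewrite ?expr0 // !exprS piM' IH. Qed.
Lemma piI f : pi f = 0 <-> Iset f.
Proof. by rewrite -pi0; split => [/piP|H]; [rewrite subr0 | apply/piP; rewrite subr0]. Qed.

Hypothesis R2 : char_quot_not2 R.

Lemma sc_central (c : R) : (forall r : R, c * r = r * c) -> forall f : S, sc c * f = f * sc c.
Proof. by move=> Hc f; apply/ffunP => i; rewrite scmulE mulscE Hc. Qed.

Lemma main_sum2 (a : S) : exists u1 u2 : S, [/\ gr_unit u1, gr_unit u2 & a = u1 + u2].
Proof.
have [b Hb] := V_final a.
have Hk := K_final (a := a).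
pose c : R := (2%:R)^-1.
have cC : forall r : R, c * r = r * c.
  by move=> r; apply/esym; apply: commrV; rewrite /GRing.comm mulr_natr mulr_natl.
have c2 : c + c = 1 by rewrite -mulr2n -mulr_natr mulVr // two_unit.
have hC : forall x : Q, pi (sc c) * x = x * pi (sc c).
  by elim/quotW => x; rewrite -!piM' sc_central.
have h2 : pi (sc c) + pi (sc c) = 1.
  rewrite -piD' -pi1; congr pi; apply/ffunP => i.
  by rewrite addE oneE /sc !ffunE; case: (i == 0%R); rewrite ?c2 ?addr0.
have HB : pi a ^+ n = pi a ^+ (n + n) * pi b.
  apply/eqP; rewrite -subr_eq0 -!piX -piM' -piB'; apply/eqP; exact/piI.
have HC : forall x : Q, pi a ^+ (n + n) * x = 0 -> pi a ^+ n * x = 0.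
  by elim/quotW => x; rewrite -!piX -!piM' => /piI H; apply/piI; apply: Hk.
have [u1 [v1 [v2 [E1 E2 E3 E4]]]] := C5main (ltn0Sn m) hC h2 HB HC
  erefl erefl erefl erefl erefl.
exists (repr u1), (a - repr u1); split; last by rewrite addrC subrK.
- apply: (@lift_unit _ (repr v1)); apply/piI; rewrite piB' piM' !reprK.
    by rewrite E1 subrr.
  by rewrite E2 subrr.
- apply: (@lift_unit _ (repr v2)); apply/piI; rewrite piB' piM' piB' !reprK.
    by rewrite E3 subrr.
  by rewrite E4 subrr.
Qed.

End Main.

Theorem corollary11 (R : unitRingType) (n : nat) :
  (0 < n)%N -> local_ring R -> char_quot_not2 R -> gr_two_clean R n.
Proof.
case: n => [//|m] _ Rloc R2 a.
have [u1 [u2 [U1 U2 E]]] := main_sum2 Rloc R2 (a : GR R m).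
exists 0, u1, u2; split => //.
- exact: (mulr0 (0 : GR R m)).
- by rewrite add0r.
Qed.
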